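(* Let $(X,d)$ be a nonempty ultra-metric space, $G$ a topological group and $\pi\colon G\times X\to X$ a continuous action which is $\pi$-uniform with respect to the uniformity $\mathcal U_d$ of $d$. Then there exist an ultra-normed Boolean group $(E,\|\cdot\|)$ on which $G$ acts continuously by automorphisms, and an isometric $G$-equivariant embedding $\iota\colon X\hookrightarrow E$ with $\iota(X)$ closed in $E$, such that: (1) $E$ is the free Boolean group $B(X)$ (with $\iota(x)=\{x\}$) and $\|\cdot\|$ is the Graev-type ultra-norm extending $d$: fixing $x_0\in X$ and extending $d$ to $\overline X=X\cup\{\mathbf 0\}$ by $d(x,\mathbf 0)=\max\{d(x,x_0),1\}$, one has $\|u\|=\inf\max_{1\le i\le n} d(x_{2i-1},x_{2i})$, the infimum over all representations $u=\sum_{i=1}^{n}(x_{2i-1}+x_{2i})$ with $x_j\in\overline X$; (2) the topological group $E$ is naturally isomorphic to the free Boolean non-archimedean group $B_{NA}(X,\mathcal U_d)$.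
   Context: An ultra-metric satisfies $d(x,z)\le\max\{d(x,y),d(y,z)\}$. An ultra-norm on an abelian group is $\|\cdot\|\ge0$ with $\|0\|=0$, $\|-u\|=\|u\|$, $\|u+v\|\le\max\{\|u\|,\|v\|\}$ and $\|u\|=0\Rightarrow u=0$; it induces the metric $\|u-v\|$. The free Boolean group $B(X)$ is the group of finite subsets of $X$ under symmetric difference, with zero $\mathbf 0=\emptyset$. An action is $\pi$-uniform on $(X,\mathcal U)$ if for every $\varepsilon\in\mathcal U$ and $g_0\in G$ there exist $\delta\in\mathcal U$ and a neighborhood $O$ of $g_0$ with $(gx,gy)\in\varepsilon$ whenever $(x,y)\in\delta$, $g\in O$. $B_{NA}(X,\mathcal U)$ is the Boolean non-archimedean topological group (local base at identity of open subgroups, every non-identity element of order 2) with uniformly continuous $i\colon X\to B_{NA}$ such that every uniformly continuous map from $X$ into a Boolean non-archimedean group factors uniquely through $i$ via a continuous homomorphism. *)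

(* Defs.v *)
From HB Require Import structures.
From mathcomp Require Import all_boot all_order all_algebra.
From mathcomp Require Import finmap.
From mathcomp Require Import all_classical all_reals all_analysis.
Set Implicit Arguments. Unset Strict Implicit. Unset Printing Implicit Defensive.
Import Order.TTheory GRing.Theory Num.Theory.
Local Open Scope classical_set_scope.
Local Open Scope ring_scope.

Section Defs.
Variable R : realType.

Definition is_ultrametric (X : Type) (d : X -> X -> R) : Prop :=
  [/\ (forall x y, 0 <= d x y), (forall x, d x x = 0), (forall x y, d x y = 0 -> x = y),
      (forall x y, d x y = d y x) &
      (forall x y z, d x z <= Num.max (d x y) (d y z))].

Definition is_topgroup (G : topologicalType) (mul : G -> G -> G) (inv : G -> G) (one : G) : Prop :=
  [/\ (forall a b c, mul a (mul b c) = mul (mul a b) c),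
      (forall a, mul one a = a /\ mul a one = a),
      (forall a, mul (inv a) a = one /\ mul a (inv a) = one),
      continuous (fun p : G * G => mul p.1 p.2) &
      continuous inv].

Definition is_action (G X : Type) (mul : G -> G -> G) (one : G) (pi : G -> X -> X) : Prop :=
  (forall x, pi one x = x) /\ (forall g h x, pi (mul g h) x = pi g (pi h x)).

Definition action_continuous (G : topologicalType) (X : Type) (d : X -> X -> R)
  (pi : G -> X -> X) : Prop :=
  forall (g0 : G) (x0 : X) (e : R), 0 < e ->
    exists O : set G, nbhs g0 O /\
      exists2 del : R, 0 < del &
        forall g x, O g -> d x x0 < del -> d (pi g x) (pi g0 x0) < e.

(* pi-uniformity w.r.t. the uniformity U_d (base of entourages {d < e}) *)
Definition pi_uniform (G : topologicalType) (X : Type) (d : X -> X -> R)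
  (pi : G -> X -> X) : Prop :=
  forall (e : R) (g0 : G), 0 < e ->
    exists2 del : R, 0 < del &
      exists O : set G, nbhs g0 O /\
        forall g x y, O g -> d x y < del -> d (pi g x) (pi g y) < e.

Variable X : choiceType.

(* free Boolean group B(X): finite subsets of X under symmetric difference *)
Definition badd (u v : {fset X}) : {fset X} := ((u `\` v) `|` (v `\` u))%fset.

(* canonical embedding of Xbar = X u {0} (0 = None) into B(X) *)
Definition osing (a : option X) : {fset X} :=
  if a is Some x then [fset x]%fset else fset0.

Definition dbar (d : X -> X -> R) (x0 : X) (a b : option X) : R :=
  match a, b with
  | Some x, Some y => d x y
  | Some x, None => Num.max (d x x0) 1
  | None, Some y => Num.max (d y x0) 1
  | None, None => 0
  end.

(* sum_{i} (x_{2i-1} + x_{2i}) for a list of pairs *)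
Definition rep_sum (s : seq (option X * option X)) : {fset X} :=
  foldr (fun p acc => badd (badd (osing p.1) (osing p.2)) acc) fset0 s.

Definition rep_max (d : X -> X -> R) (x0 : X) (s : seq (option X * option X)) : R :=
  \big[Num.max/0]_(p <- s) dbar d x0 p.1 p.2.

Definition graev (d : X -> X -> R) (x0 : X) (u : {fset X}) : R :=
  inf [set r : R | exists s : seq (option X * option X),
        [/\ s != [::], rep_sum s = u & r = rep_max d x0 s]].

(* ultra-norm on the Boolean group B(X) (note -u = u) *)
Definition is_ultranorm (N : {fset X} -> R) : Prop :=
  [/\ (forall u, 0 <= N u), N fset0 = 0,
      (forall u v, N (badd u v) <= Num.max (N u) (N v)) &
      (forall u, N u = 0 -> u = fset0)].

Definition bact (G : Type) (pi : G -> X -> X) (g : G) (u : {fset X}) : {fset X} :=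
  [fset pi g x | x in u]%fset.

Definition nonarchimedean (H : topologicalZmodType) : Prop :=
  forall U : set H, nbhs (0 : H) U ->
    exists V : set H, [/\ open V, V 0, (forall a b, V a -> V b -> V (a - b)) & V `<=` U].

Definition unif_cont_into (d : X -> X -> R) (H : topologicalZmodType) (f : X -> H) : Prop :=
  forall U : set H, nbhs (0 : H) U ->
    exists2 del : R, 0 < del & forall x y, d x y < del -> U (f x - f y).

Definition norm_continuous (N : {fset X} -> R) (H : topologicalType) (F : {fset X} -> H) : Prop :=
  forall (u : {fset X}) (U : set H), nbhs (F u) U ->
    exists2 del : R, 0 < del & forall v, N (badd v u) < del -> U (F v).

Definition bhom (H : zmodType) (F : {fset X} -> H) : Prop :=
  forall u v, F (badd u v) = F u + F v.

(* (B(X), N) with u |-> {x} has the universal property defining B_NA(X, U_d) *)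
Definition is_free_BNA (d : X -> X -> R) (N : {fset X} -> R) : Prop :=
  forall (H : topologicalZmodType), (forall h : H, h + h = 0) -> nonarchimedean H ->
  forall f : X -> H, unif_cont_into d f ->
    exists F : {fset X} -> H,
      [/\ bhom F, norm_continuous N F, (forall x, F [fset x]%fset = f x) &
          forall F' : {fset X} -> H,
            [/\ bhom F', norm_continuous N F' & forall x, F' [fset x]%fset = f x] -> F' = F].

End Defs.

(* Main.v *)
Require Import Defs.
From HB Require Import structures.
From mathcomp Require Import all_boot all_order all_algebra.
From mathcomp Require Import finmap.
From mathcomp Require Import all_classical all_reals all_analysis.
From mathcomp Require Import zify ring lra.
Import Order.TTheory GRing.Theory Num.Theory.
Local Open Scope classical_set_scope.
Local Open Scope ring_scope.

Section Bool.
Local Open Scope fset_scope.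
Variable X : choiceType.
Implicit Types A B C : {fset X}.

Lemma in_badd A B y : (y \in badd A B) = (y \in A) (+) (y \in B).
Proof. by rewrite /badd !inE; case: (y \in A); case: (y \in B). Qed.

Lemma baddA A B C : badd A (badd B C) = badd (badd A B) C.
Proof. apply/fsetP=> y; rewrite !in_badd; by case: (y \in A); case: (y \in B); case: (y \in C). Qed.

Lemma baddC A B : badd A B = badd B A.
Proof. apply/fsetP=> y; rewrite !in_badd; by case: (y \in A); case: (y \in B). Qed.

Lemma badd0 A : badd A fset0 = A.
Proof. apply/fsetP=> y; rewrite !in_badd inE; by case: (y \in A). Qed.

Lemma badd0l A : badd fset0 A = A.
Proof. by rewrite baddC badd0. Qed.

Lemma baddxx A : badd A A = fset0.
Proof. apply/fsetP=> y; rewrite !in_badd inE; by case: (y \in A). Qed.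

Lemma odd_card_badd A B : odd #|` badd A B| = odd #|` A| (+) odd #|` B|.
Proof.
have -> : badd A B = (A `|` B) `\` (A `&` B).
  apply/fsetP=> y; rewrite in_badd !inE; by case: (y \in A); case: (y \in B).
rewrite cardfsDS; last by apply/fsubsetP=> y; rewrite !inE => /andP[->].
rewrite cardfsU.
have h1 : (#|` A `&` B| <= #|` A|)%N by apply: fsubset_leq_card; apply/fsubsetP=> y; rewrite !inE => /andP[].
have h2 : (#|` A `&` B| <= #|` B|)%N by apply: fsubset_leq_card; apply/fsubsetP=> y; rewrite !inE => /andP[].
set a := #|` A| in h1 h2 *; set b := #|` B| in h1 h2 *; set c := #|` A `&` B| in h1 h2 *.
have -> : (a + b - c - c = (a - c) + (b - c))%N by lia.
rewrite oddD !oddB //; by case: (odd a); case: (odd b); case: (odd c).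
Qed.

Definition Sl (l : seq X) : {fset X} := foldr (fun x acc => badd [fset x]%fset acc) fset0 l.

Lemma memSl l y : (y \in Sl l) = odd (count_mem y l).
Proof.
elim: l => [|x l IH] //=; rewrite in_badd IH inE oddD eq_sym; by case: (x == y).
Qed.

Lemma Sl_enum A : Sl (enum_fset A) = A.
Proof.
apply/fsetP=> y; rewrite memSl count_uniq_mem ?fset_uniq //; by case: (y \in A).
Qed.

Lemma Sl_cons x l : Sl (x :: l) = badd [fset x]%fset (Sl l).
Proof. by []. Qed.

End Bool.

Section Graev.
Variables (R : realType) (X : choiceType) (d : X -> X -> R) (x0 : X).
Hypothesis hd : is_ultrametric d.
Implicit Types (s t : seq (option X * option X)) (p : option X * option X) (u v : {fset X}).
Local Notation db := (dbar d x0).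
Local Notation N := (graev d x0).

Lemma d_ge0 x y : 0 <= d x y. Proof. by case: hd. Qed.
Lemma d_xx x : d x x = 0. Proof. by case: hd. Qed.
Lemma d_eq0 x y : d x y = 0 -> x = y. Proof. by case: hd => _ _ h _ _; apply: h. Qed.
Lemma d_sym x y : d x y = d y x. Proof. by case: hd. Qed.
Lemma d_ult x y z : d x z <= Num.max (d x y) (d y z). Proof. by case: hd => _ _ _ _; apply. Qed.

Lemma maxr_r (a b c : R) : a <= b -> a <= Num.max c b.
Proof. by move=> h; rewrite le_max h orbT. Qed.
Lemma maxr_l (a b c : R) : a <= b -> a <= Num.max b c.
Proof. by move=> h; rewrite le_max h. Qed.

Lemma db_ge0 a b : 0 <= db a b.
Proof. case: a => [x|]; case: b => [y|] //=; rewrite ?d_ge0 // maxr_r //. Qed.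

Lemma db_N1 x : 1 <= db (Some x) None.
Proof. by rewrite /= maxr_r. Qed.
Lemma db_N1' x : 1 <= db None (Some x).
Proof. by rewrite /= maxr_r. Qed.

Lemma db_sym a b : db a b = db b a.
Proof. case: a => [x|]; case: b => [y|] //=; by rewrite d_sym. Qed.

Lemma db_ult a b c : db a c <= Num.max (db a b) (db b c).
Proof.
case: a => [x|]; case: b => [y|]; case: c => [z|] /=.
- exact: d_ult.
- rewrite ge_max; apply/andP; split; last by rewrite maxr_r // maxr_r.
  apply: (le_trans (d_ult x y x0)); rewrite ge_max maxr_l //= maxr_r // maxr_l //.
- rewrite (le_trans (d_ult x x0 z)) // ge_max; apply/andP; split.
    by rewrite maxr_l // maxr_l.
  by rewrite d_sym maxr_r // maxr_l.
- by rewrite maxr_l.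
- rewrite ge_max; apply/andP; split; last by rewrite maxr_l // maxr_r.
  apply: (le_trans (d_ult z y x0)); rewrite ge_max (d_sym z y) maxr_r //= maxr_l // maxr_l //.
- by rewrite maxr_l // maxr_r.
- by rewrite maxr_r.
- by rewrite maxr_l.
Qed.

Lemma rep_sum_cons p s : rep_sum (p :: s) = badd (badd (osing p.1) (osing p.2)) (rep_sum s).
Proof. by []. Qed.

Lemma rep_sum_cat s t : rep_sum (s ++ t) = badd (rep_sum s) (rep_sum t).
Proof. elim: s => [|p s IH] /=; first by rewrite badd0l. by rewrite IH baddA. Qed.

Lemma rep_max_cons p s : rep_max d x0 (p :: s) = Num.max (db p.1 p.2) (rep_max d x0 s).
Proof. by rewrite /rep_max big_cons. Qed.

Lemma rep_max_ge0 s : 0 <= rep_max d x0 s.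
Proof. elim: s => [|p s IH]; first by rewrite /rep_max big_nil. by rewrite rep_max_cons maxr_r. Qed.

Lemma rep_max_ge s p : p \in s -> db p.1 p.2 <= rep_max d x0 s.
Proof. move=> ps; exact: (@le_bigmax_seq _ _ _ s 0 p xpredT (fun p => db p.1 p.2) ps isT). Qed.

Lemma rep_max_lt s c : 0 < c -> (forall p, p \in s -> db p.1 p.2 < c) -> rep_max d x0 s < c.
Proof. move=> c0 h; rewrite /rep_max big_seq; exact: bigmax_lt. Qed.

Lemma rep_max_cat s t : rep_max d x0 (s ++ t) = Num.max (rep_max d x0 s) (rep_max d x0 t).
Proof.
elim: s => [|p s IH].
  by rewrite /= {2}/rep_max big_nil; apply/esym/max_idPr; apply: rep_max_ge0.
by rewrite cat_cons !rep_max_cons IH maxA.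
Qed.

Definition RS (u : {fset X}) := [set r : R | exists s : seq (option X * option X),
        [/\ s != [::], rep_sum s = u & r = rep_max d x0 s]].

Lemma N_def u : N u = inf (RS u). Proof. by []. Qed.

Lemma rep_sum_SN l : rep_sum [seq (Some x, None) | x <- l] = @Sl X l.
Proof. elim: l => [|x l IH] //=; by rewrite badd0 IH. Qed.

Lemma RS_ne u : RS u !=set0.
Proof.
exists (rep_max d x0 ((None, None) :: [seq (Some x, None) | x <- enum_fset u])).
exists ((None, None) :: [seq (Some x, None) | x <- enum_fset u]); split => //.
by rewrite rep_sum_cons rep_sum_SN /= !badd0l Sl_enum.
Qed.

Lemma RS_lb u : lbound (RS u) 0.
Proof. by move=> r [s [_ _ ->]]; apply: rep_max_ge0. Qed.

Lemma N_ge0 u : 0 <= N u.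
Proof. exact: lb_le_inf (RS_ne u) (RS_lb u). Qed.

Lemma N_le s u : s != [::] -> rep_sum s = u -> N u <= rep_max d x0 s.
Proof. move=> s0 su; apply: ge_inf; first by exists 0; apply: RS_lb. by exists s. Qed.

Lemma N_lt u c : N u < c -> exists s, [/\ s != [::], rep_sum s = u & rep_max d x0 s < c].
Proof. move=> /(inf_lt (RS_ne u)) [r [s [s0 su ->]] h]; by exists s. Qed.

Lemma N0 : N fset0 = 0.
Proof.
apply/le_anti; rewrite N_ge0 andbT.
have e0 : rep_sum [:: (@None X, @None X)] = fset0 by rewrite /= !badd0l.
have := @N_le [:: (None, None)] fset0 isT e0.
by rewrite rep_max_cons /= /rep_max big_nil maxxx.
Qed.

Lemma N_ult u v : N (badd u v) <= Num.max (N u) (N v).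
Proof.
rewrite leNgt; apply/negP => h.
move: (h); rewrite gt_max => /andP[hu hv].
have [s [s0 su hs]] := N_lt _ _ hu.
have [t [t0 tv ht]] := N_lt _ _ hv.
have : N (badd u v) <= rep_max d x0 (s ++ t).
  apply: N_le; last by rewrite rep_sum_cat su tv.
  by case: s s0 {su hs}.
rewrite rep_max_cat leNgt gt_max hs ht.
by [].
Qed.


Definition restr (c : option X) (M : R) u := [fset x in u | db c (Some x) <= M]%fset.

Lemma restr_badd c M u v : restr c M (badd u v) = badd (restr c M u) (restr c M v).
Proof.
apply/fsetP=> y; rewrite !in_badd !inE /=.
by case: (y \in u); case: (y \in v); case: (db c (Some y) <= M).
Qed.

Lemma odd_restr_osing c M a : ~~ (db c None <= M) -> odd #|` restr c M (osing a)| = (db c a <= M).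
Proof.
move=> hN; case: a => [x|] /=.
  have -> : restr c M [fset x]%fset = if db c (Some x) <= M then [fset x]%fset else fset0.
    case: (boolP (db c (Some x) <= M)) => hx; apply/fsetP => y; rewrite !inE /=;
      case: (boolP (y == x)) => [/eqP ->|] //=; by rewrite ?hx ?(negbTE hx).
  by case: (db c (Some x) <= M); rewrite ?cardfs1 ?cardfs0.
rewrite (negbTE hN).
have -> : restr c M fset0 = fset0 by apply/fsetP=> y; rewrite !inE.
by rewrite cardfs0.
Qed.

Lemma class_even s M c : (forall p, p \in s -> db p.1 p.2 <= M) -> ~~ (db c None <= M) ->
  ~~ odd #|` restr c M (rep_sum s)|.
Proof.
move=> hs hN; elim: s hs => [|p s IH] hs.
  have -> : restr c M fset0 = fset0 by apply/fsetP=> y; rewrite !inE.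
  by rewrite cardfs0.
rewrite rep_sum_cons !restr_badd !odd_card_badd !odd_restr_osing //.
have IH' : ~~ odd #|` restr c M (rep_sum s)|.
  by apply: IH => q qs; apply: hs; rewrite inE qs orbT.
rewrite (negbTE IH').
have hp := hs p (mem_head _ _).
have e : (db c p.1 <= M) = (db c p.2 <= M).
  apply/idP/idP => h.
    apply: (le_trans (db_ult c p.1 p.2)); by rewrite ge_max h hp.
  apply: (le_trans (db_ult c p.2 p.1)); by rewrite ge_max h db_sym hp.
by rewrite e; case: (db c p.2 <= M).
Qed.

Lemma isolated s u M a : rep_sum s = u -> (forall p, p \in s -> db p.1 p.2 <= M) -> 0 <= M ->
  ~~ (db (Some a) None <= M) -> a \in u -> (forall y, y \in u -> d a y <= M -> y = a) -> False.
Proof.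
move=> su hs M0 hN au hy.
have := @class_even s M (Some a) hs hN; rewrite su.
have -> : restr (Some a) M u = [fset a]%fset.
  apply/fsetP=> y; rewrite !inE /=; apply/idP/idP.
    by move=> /andP[yu ay]; rewrite (hy y yu ay).
  by move/eqP ->; rewrite au d_xx M0.
by rewrite cardfs1.
Qed.

Lemma rep_isolated s u a : rep_sum s = u -> rep_max d x0 s < 1 -> a \in u ->
  (forall y, y \in u -> d a y <= rep_max d x0 s -> y = a) -> False.
Proof.
move=> su h1 au hy; apply: (@isolated s u (rep_max d x0 s) a su _ (rep_max_ge0 _) _ au hy).
  by move=> p ps; apply: rep_max_ge.
by rewrite -ltNge (lt_le_trans h1) // db_N1.
Qed.

Definition sepu u := \big[Num.min/1]_(a <- u) \big[Num.min/1]_(y <- u | y != a) d a y.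

Lemma sepu_gt0 u : 0 < sepu u.
Proof.
apply: lt_bigmin => // a _; apply: lt_bigmin => // y ya.
rewrite lt_neqAle d_ge0 andbT; apply/eqP => /esym /d_eq0 e.
by rewrite e eqxx in ya.
Qed.

Lemma sepu_le1 u : sepu u <= 1.
Proof. exact: bigmin_le_id. Qed.

Lemma sepu_le u a y : a \in u -> y \in u -> y != a -> sepu u <= d a y.
Proof.
move=> au yu ya; apply: (le_trans (ge_bigmin_seq _ _ xpredT _ au isT)).
exact: (ge_bigmin_seq _ _ (fun y => y != a) _ yu ya).
Qed.

Lemma N_pos u : N u = 0 -> u = fset0.
Proof.
move=> h; apply/eqP; apply/negPn/negP => /fset0Pn [a au].
have : N u < sepu u by rewrite h sepu_gt0.
move=> /(N_lt _ _) [s [_ su hs]].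
apply: (@rep_isolated s u a su (lt_le_trans hs (sepu_le1 u)) au) => y yu hy.
apply/eqP/negPn/negP => ya.
have := lt_le_trans (le_lt_trans hy hs) (@sepu_le u a y au yu ya).
by rewrite ltxx.
Qed.


Lemma N_iso x y : N (badd [fset x]%fset [fset y]%fset) = d x y.
Proof.
apply/le_anti/andP; split.
  have e : rep_sum [:: (Some x, Some y)] = badd [fset x]%fset [fset y]%fset by rewrite /= badd0.
  apply: (le_trans (N_le _ _ (isT : [:: (Some x, Some y)] != [::]) e)).
  by rewrite rep_max_cons /= /rep_max big_nil ge_max lexx d_ge0.
rewrite leNgt; apply/negP => /(N_lt _ _) [s [_ su hs]].
set M := rep_max d x0 s in hs.
have hp : forall p, p \in s -> db p.1 p.2 <= M by move=> p ps; apply: rep_max_ge.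
have M0 : 0 <= M := rep_max_ge0 s.
case: (eqVneq x y) => [exy|nxy].
  by move: hs; rewrite exy d_xx ltNge M0.
have mem z : (z \in badd [fset x]%fset [fset y]%fset) = (z == x) (+) (z == y).
  by rewrite in_badd !inE.
have hx : db (Some x) None <= M.
  apply/negPn/negP => hN; apply: (@isolated s _ M x su hp M0 hN).
    by rewrite mem eqxx (negbTE nxy).
  move=> z; rewrite mem; case: (eqVneq z x) => // _; case: (eqVneq z y) => // -> _.
  by rewrite leNgt hs.
have hy : db (Some y) None <= M.
  apply/negPn/negP => hN; apply: (@isolated s _ M y su hp M0 hN).
    by rewrite mem eqxx eq_sym (negbTE nxy).
  move=> z; rewrite mem; case: (eqVneq z y) => // _; case: (eqVneq z x) => // -> _.
  by rewrite d_sym leNgt hs.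
have : d x y <= M.
  have := db_ult (Some x) None (Some y); rewrite /= => h.
  apply: (le_trans h); rewrite ge_max; apply/andP; split; first exact: hx.
  by rewrite /= d_sym /= in hy *.
by rewrite leNgt hs.
Qed.

Lemma N_closed u : (forall x, u <> [fset x]%fset) ->
  exists2 e : R, 0 < e & forall x, e <= N (badd u [fset x]%fset).
Proof.
move=> hu; exists (sepu u); first exact: sepu_gt0.
move=> x; rewrite leNgt; apply/negP => /(N_lt _ _) [s [_ su hs]].
set M := rep_max d x0 s in hs.
have M1 : M < 1 := lt_le_trans hs (sepu_le1 u).
have mem z : (z \in badd u [fset x]%fset) = (z \in u) (+) (z == x).
  by rewrite in_badd !inE.
have iso := @rep_isolated s _ _ su M1.
have sepM a y : a \in u -> y \in u -> y != a -> d a y <= M -> False.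
  move=> au yu ya h; have := lt_le_trans (le_lt_trans h hs) (@sepu_le u a y au yu ya).
  by rewrite ltxx.
case: (eqVneq u fset0) => [u0|/fset0Pn [a au]].
  apply: (iso x); first by rewrite mem u0 inE eqxx.
  by move=> y; rewrite mem u0 inE /= => /eqP.
have [b [bu ba]] : exists b, b \in u /\ b != a.
  apply: contrapT => hn; apply: (hu a); apply/fsetP => z; rewrite inE.
  apply/idP/idP => [zu|/eqP -> //]; apply/negPn/negP => za; apply: hn; exists z; split => //.
have key a' b' : a' \in u -> b' \in u -> b' != a' -> a' != x -> False.
  move=> au' bu' ba' ax.
  have av : a' \in badd u [fset x]%fset by rewrite mem au' (negbTE ax).
  case: (boolP ((x \notin u) && (d a' x <= M))) => [/andP [xu hax]|hc].
    have bx : b' != x by apply: contraNneq xu => <-.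
    apply: (iso b'); first by rewrite mem bu' (negbTE bx).
    move=> y; rewrite mem; case: (boolP (y \in u)) => yu /=.
      move=> _ hby; apply/eqP/negPn/negP => yb; exact: (sepM b' y bu' yu yb hby).
    move=> /eqP -> hbx; exfalso; apply: (sepM a' b' au' bu' ba').
    apply: (le_trans (d_ult a' x b')); rewrite ge_max hax /=; by rewrite d_sym.
  apply: (iso a' av) => y; rewrite mem; case: (boolP (y \in u)) => yu /=.
    move=> _ hay; apply/eqP/negPn/negP => ya; exact: (sepM a' y au' yu ya hay).
  move=> /eqP eyx hax; subst y; exfalso; move: hc; by rewrite yu hax.
case: (eqVneq a x) => [ax|ax].
  have ab : a != b by rewrite eq_sym.
  have bx : b != x by rewrite -ax.
  exact: (key b a bu au ab bx).
exact: (key a b au bu ba ax).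
Qed.

End Graev.

Lemma nbhs_shift (H : topologicalZmodType) (c : H) (U : set H) :
  nbhs c U -> nbhs (0 : H) (fun w => U (w + c)).
Proof.
move=> hU.
have h := @continuous_comp H (H * H)%type H (fun w => (w, c)) (fun x : H * H => x.1 + x.2) 0.
have h1 : {for 0, continuous (fun w : H => (w, c))}.
  by apply: cvg_pair; [exact: cvg_id|exact: cvg_cst].
have h2 := h h1 (add_continuous (0, c)).
move: h2; rewrite /prop_for /continuous_at /= add0r => h2; apply: h2 hU.

Qed.

Lemma open_nbhs0 (H : topologicalType) (V : set H) (x : H) : open V -> V x -> nbhs x V.
Proof. by move=> oV Vx; apply: open_nbhs_nbhs; split. Qed.

Section Act.
Variables (R : realType) (X : choiceType) (d : X -> X -> R) (x0 : X).
Hypothesis hd : is_ultrametric d.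
Variables (G : topologicalType) (mul : G -> G -> G) (inv : G -> G) (one : G) (pi : G -> X -> X).
Hypothesis htg : is_topgroup mul inv one.
Hypothesis hact : is_action mul one pi.
Local Notation db := (dbar d x0).
Local Notation N := (graev d x0).

Lemma pi_inv g x : pi g (pi (inv g) x) = x.
Proof.
case: hact => h1 hM; case: htg => _ _ hinv _ _.
by rewrite -hM (proj2 (hinv g)) h1.
Qed.

Lemma pi_invK g x : pi (inv g) (pi g x) = x.
Proof.
case: hact => h1 hM; case: htg => _ _ hinv _ _.
by rewrite -hM (proj1 (hinv g)) h1.
Qed.

Lemma pi_inj g : injective (pi g).
Proof. by move=> x y e; rewrite -(pi_invK g x) e pi_invK. Qed.

Lemma mem_bact g u y : (pi g y \in bact pi g u) = (y \in u).
Proof. by rewrite /bact mem_imfset //; apply: pi_inj. Qed.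

Lemma bact_one u : bact pi one u = u.
Proof.
case: hact => h1 _; apply/fsetP => x; rewrite -{1}(h1 x) mem_bact //.
Qed.

Lemma bactM g h u : bact pi (mul g h) u = bact pi g (bact pi h u).
Proof.
case: hact => _ hM; apply/fsetP => x; rewrite -(pi_inv (mul g h) x).
by rewrite mem_bact hM !mem_bact.
Qed.

Lemma bact_badd g u v : bact pi g (badd u v) = badd (bact pi g u) (bact pi g v).
Proof.
apply/fsetP => x; rewrite -(pi_inv g x) in_badd !mem_bact in_badd //.
Qed.

Lemma bact1 g x : bact pi g [fset x]%fset = [fset pi g x]%fset.
Proof. by rewrite /bact imfset_fset1. Qed.

Lemma bact0 g : bact pi g fset0 = fset0.
Proof. by rewrite /bact imfset0. Qed.

Lemma bact_osing g a : bact pi g (osing a) = osing (omap (pi g) a).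
Proof. by case: a => [x|] /=; rewrite ?bact1 ?bact0. Qed.

Lemma badd_swap (A B C D : {fset X}) : badd (badd A B) (badd C D) = badd (badd A C) (badd B D).
Proof.
apply/fsetP=> y; rewrite !in_badd.
by case: (y \in A); case: (y \in B); case: (y \in C); case: (y \in D).
Qed.

Lemma N_bact_lt g v c del : 0 < c -> del <= 1 ->
  (forall a b, d a b < del -> d (pi g a) (pi g b) < c) ->
  N v < del -> N (bact pi g v) < c.
Proof.
move=> c0 del1 hg /(N_lt R X d x0 _ _) [s [s0 sv hs]].
pose s' := [seq (omap (pi g) p.1, omap (pi g) p.2) | p <- s].
have e : rep_sum s' = bact pi g v.
  rewrite -sv /s'; elim: (s) => [|p t IH] /=; first by rewrite bact0.
  by rewrite IH !bact_badd !bact_osing.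
apply: (le_lt_trans (N_le R X d x0 _ _ _ e)); first by rewrite /s'; case: (s) s0.
apply: (rep_max_lt R X d x0) => // q /mapP [p ps ->] /=.
have hp := le_lt_trans (rep_max_ge R X d x0 _ _ ps) hs.
move: hp; case: p ps => [[a|] [b|]] ps //= hp.
- exact: hg.
- by exfalso; move: (lt_le_trans (le_lt_trans (db_N1 R X d x0 a) hp) del1); rewrite ltxx.
- by exfalso; move: (lt_le_trans (le_lt_trans (db_N1' R X d x0 b) hp) del1); rewrite ltxx.
Qed.

Lemma N_sum_lt g g0 e (l : seq X) : 0 < e -> (forall x, x \in l -> d (pi g x) (pi g0 x) < e) ->
  N (badd (bact pi g (Sl X l)) (bact pi g0 (Sl X l))) < e.
Proof.
move=> e0; elim: l => [|x l IH] h /=.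
  by rewrite !bact0 badd0 (N0 R X d x0).
rewrite !bact_badd !bact1 badd_swap.
apply: (le_lt_trans (N_ult R X d x0 _ _)); rewrite gt_max (N_iso R X d x0 hd) // h ?mem_head //=.
by apply: IH => y yl; apply: h; rewrite inE yl orbT.
Qed.

End Act.

Section BNA.
Variables (R : realType) (X : choiceType) (d : X -> X -> R) (x0 : X).
Hypothesis hd : is_ultrametric d.
Local Notation db := (dbar d x0).
Local Notation N := (graev d x0).

Lemma free_BNA : is_free_BNA d N.
Proof.
move=> H hB hna f hf.
pose F := fun u : {fset X} => \sum_(x <- u) f x.
have F0 : F fset0 = 0 by rewrite /F big_seq_fset0.
have Fneg : forall h : H, - h = h.
  by move=> h; apply/esym/eqP; rewrite -addr_eq0 hB.
have F1 : forall x B, F (badd [fset x]%fset B) = f x + F B.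
  move=> x B; case: (boolP (x \in B)) => xB.
    have -> : badd [fset x]%fset B = (B `\ x)%fset.
      apply/fsetP => y; rewrite in_badd !inE; case: (eqVneq y x) => [->|] //=.
      by rewrite xB.
    by rewrite /F (big_fsetD1 _ xB) addrA hB add0r.
  have -> : badd [fset x]%fset B = (x |` B)%fset.
    apply/fsetP => y; rewrite in_badd !inE; case: (eqVneq y x) => [->|] //=.
  by rewrite /F big_fsetU1.
have Fx : forall x, F [fset x]%fset = f x.
  by move=> x; have := F1 x fset0; rewrite badd0 F0 addr0.
have FH : forall A B, F (badd A B) = F A + F B.
  move=> A B; suff h : forall l, F (badd (Sl X l) B) = F (Sl X l) + F B.
    by have := h (enum_fset A); rewrite Sl_enum.
  elim => [|x l IH] /=.
    by rewrite badd0l F0 add0r.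
  by rewrite -baddA !F1 IH addrA.
exists F; split.
- by move=> u v; apply: FH.
- move=> u U hU.
  have hW := @nbhs_shift H (F u) U hU.
  have [V [oV V0 Vsub VW]] := hna _ hW.
  have Vn : nbhs 0 V := @open_nbhs0 H V 0 oV V0.
  have [del del0 hdel] := hf V Vn.
  have Vadd a b : V a -> V b -> V (a + b).
    move=> Va Vb; have := Vsub a (0 - b) Va (Vsub 0 b V0 Vb); by rewrite sub0r opprK.
  exists (Num.min del 1); first by rewrite lt_min del0 ltr01.
  move=> v hv.
  have [s [_ sv hs]] := N_lt R X d x0 _ _ hv.
  have key : V (F (rep_sum s)).
    have : forall p, p \in s -> db p.1 p.2 < Num.min del 1.
      by move=> p ps; apply: le_lt_trans (rep_max_ge R X d x0 _ _ ps) hs.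
    elim: (s) {sv hs} => [|p t IH] hps /=; first by rewrite F0.
    rewrite !FH; apply: Vadd; last by apply: IH => q qt; apply: hps; rewrite inE qt orbT.
    have hp := hps p (mem_head _ _); case: p hp {hps} => [[a|] [b|]] /= hp.
    - rewrite !Fx -[f b]Fneg; apply: hdel; move: hp; rewrite lt_min => /andP[] //.
    - exfalso; move: hp; rewrite lt_min => /andP[_].
      by move=> h; move: (le_lt_trans (db_N1 R X d x0 a) h); rewrite ltxx.
    - exfalso; move: hp; rewrite lt_min => /andP[_].
      by move=> h; move: (le_lt_trans (db_N1' R X d x0 b) h); rewrite ltxx.
    - by rewrite F0 addr0.
  have := VW _ key; rewrite sv /= FH -addrA hB addr0 //.
- exact: Fx.
- move=> F' [hF' _ hF'x]; apply: funext => u.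
  suff h : forall l, F' (Sl X l) = F (Sl X l) by have := h (enum_fset u); rewrite Sl_enum.
  elim => [|x l IH] /=.
    have := hF' fset0 fset0; rewrite baddxx => h.
    have := congr1 (fun z => z - F' fset0) h; rewrite subrr addrK => <-.
    by rewrite F0.
  by rewrite hF' hF'x IH F1.
Qed.

End BNA.

Theorem theorem8p2 (R : realType) (X : choiceType) (d : X -> X -> R)
  (G : topologicalType) (mul : G -> G -> G) (inv : G -> G) (one : G)
  (pi : G -> X -> X) :
  is_ultrametric d -> (exists x : X, True) ->
  is_topgroup mul inv one -> is_action mul one pi ->
  action_continuous d pi -> pi_uniform d pi ->
  forall x0 : X,
  [/\ is_ultranorm (graev d x0),
      (* iota(x) = {x} is an isometric embedding *)
      (forall x y, graev d x0 (badd [fset x]%fset [fset y]%fset) = d x y) /\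
      (* iota(X) is closed in (B(X), ||.||) *)
      (forall u : {fset X}, (forall x, u <> [fset x]%fset) ->
         exists2 e : R, 0 < e & forall x, e <= graev d x0 (badd u [fset x]%fset)),
      (* G acts on B(X) by automorphisms, and iota is G-equivariant *)
      [/\ (forall u, bact pi one u = u),
          (forall g h u, bact pi (mul g h) u = bact pi g (bact pi h u)),
          (forall g u v, bact pi g (badd u v) = badd (bact pi g u) (bact pi g v)) &
          (forall g x, bact pi g [fset x]%fset = [fset pi g x]%fset)],
      (* the action G x B(X) -> B(X) is continuous *)
      (forall (g0 : G) (u0 : {fset X}) (e : R), 0 < e ->
         exists O : set G, nbhs g0 O /\
           exists2 del : R, 0 < del &
             forall g u, O g -> graev d x0 (badd u u0) < del ->
               graev d x0 (badd (bact pi g u) (bact pi g0 u0)) < e) &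
      (* (B(X), ||.||) is the free Boolean non-archimedean group B_NA(X, U_d) *)
      is_free_BNA d (graev d x0)].
Proof.
move=> hd _ htg hact hcont hunif x0.
split.
- split.
  + exact: N_ge0.
  + exact: N0.
  + exact: N_ult.
  + exact: N_pos hd.
- split; first exact: N_iso hd.
  exact: N_closed hd.
- split.
  + exact: bact_one htg hact.
  + exact: bactM htg hact.
  + exact: bact_badd htg hact.
  + exact: bact1.
- have fin : forall (g0 : G) (e : R) (l : seq X), 0 < e -> exists O : set G,
      nbhs g0 O /\ forall g, O g -> forall x, x \in l -> d (pi g x) (pi g0 x) < e.
    move=> g0 e l e0; elim: l => [|x l [Ol [hO hOl]]].
      by exists setT; split; [exact: filterT|].
    have [Ox [hOx [del del0 hdel]]] := hcont g0 x e e0.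
    exists (Ox `&` Ol); split; first exact: filterI.
    move=> g [gOx gO] y; rewrite inE => /orP[/eqP ->|yl]; last exact: hOl.
    by apply: hdel => //; rewrite (d_xx R X d hd x).
  move=> g0 u0 e e0.
  have [del1 del10 [Q1 [hO1 hg1]]] := hunif e g0 e0.
  have [Q2 [hO2 hg2]] := fin g0 e (enum_fset u0) e0.
  exists (Q1 `&` Q2); split; first exact: filterI.
  exists (Num.min del1 1); first by rewrite lt_min del10 ltr01.
  move=> g u [gO1 gO2] hu.
  have eq : badd (bact pi g u) (bact pi g0 u0) =
      badd (bact pi g (badd u u0)) (badd (bact pi g u0) (bact pi g0 u0)).
    rewrite (bact_badd _ _ _ _ _ _ htg hact); apply/fsetP => y; rewrite !in_badd.
    by case: (y \in bact pi g u); case: (y \in bact pi g u0); case: (y \in bact pi g0 u0).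
  rewrite eq; apply: le_lt_trans (N_ult R X d x0 _ _) _; rewrite gt_max; apply/andP; split.
    apply: (N_bact_lt R X d x0 G mul inv one pi htg hact g _ e _ e0 _ _ hu); first by rewrite ge_min lexx orbT.
    by move=> a b; rewrite lt_min => /andP[h _]; exact: hg1.
  by have := N_sum_lt R X d x0 hd G mul inv one pi htg hact g g0 e (enum_fset u0) e0 (hg2 g gO2); rewrite Sl_enum.
- exact: free_BNA.
Qed.
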